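(* Let $p\ge0$, $m\ge1$ be integers with $p+\frac m2>1$. Let $\mathbb{H}$ be the minimal operator in $\mathbb{B}_p$ generated by $H^{p,m}=a^{*p}(a^m+a^{*m})a^p$, i.e. the closure of the restriction of $H^{p,m}$ to the polynomials in $\mathbb{B}_p$. Then $\mathbb{H}$ is a closed symmetric operator which is completely indeterminate: its deficiency numbers satisfy $n_+=n_-=m$.
   Context: The Bargmann space $\mathbb{B}$ is the Hilbert space of entire functions with $\|\phi\|^2=\int_{\mathbb{C}}|\phi(z)|^2e^{-|z|^2}dx\,dy<\infty$; $e_k(z)=z^k/\sqrt{k!}$ is an orthonormal basis; $a\phi=\phi'$, $a^*\phi=z\phi$. $\mathbb{B}_p=\{\phi\in\mathbb{B}:\phi(0)=\phi'(0)=\dots=\phi^{(p-1)}(0)=0\}$, the closed span of $\{e_k:k\ge p\}$. In this basis $H^{p,m}e_k=0$ for $k<p$, $H^{p,m}e_k=\frac{\sqrt{k!(k+m)!}}{(k-p)!}e_{k+m}$ for $p\le k<p+m$, and $H^{p,m}e_k=\frac{\sqrt{k!(k-m)!}}{(k-p-m)!}e_{k-m}+\frac{\sqrt{k!(k+m)!}}{(k-p)!}e_{k+m}$ for $k\ge p+m$. For a closed symmetric operator $T$ the deficiency numbers are $n_\pm=\dim\ker(T^*\mp iI)$; $T$ (represented by a block Jacobi matrix with $m\times m$ blocks) is called completely indeterminate if $n_+=n_-=m$. *)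

(* Defs.v *)
From Stdlib Require Import Reals Lra Lia Arith.
Open Scope R_scope.

Record C := mkC { re : R ; im : R }.
Definition C0 : C := mkC 0 0.
Definition Cadd (a b : C) : C := mkC (re a + re b) (im a + im b).
Definition Csub (a b : C) : C := mkC (re a - re b) (im a - im b).
Definition Cmul (a b : C) : C :=
  mkC (re a * re b - im a * im b) (re a * im b + im a * re b).
Definition Cconj (a : C) : C := mkC (re a) (- im a).
Definition Cnorm2 (a : C) : R := re a * re a + im a * im a.

Fixpoint Csum (f : nat -> C) (n : nat) : C :=
  match n with O => C0 | S n' => Cadd (Csum f n') (f n') end.

(** A vector of the Bargmann space B is identified with
    its coefficient sequence in the orthonormal basis e_k = z^k/sqrt(k!),
    i.e. B is identified (unitarily) with l^2(N; C). *)
Definition vec := nat -> C.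

Definition l2 (x : vec) : Prop :=
  exists s, infinite_sum (fun k => Cnorm2 (x k)) s.

(** B_p = closed span of {e_k : k >= p} *)
Definition inBp (p : nat) (x : vec) : Prop :=
  l2 x /\ forall k, (k < p)%nat -> x k = C0.

(** polynomials in B_p = finite linear combinations of e_k, k >= p *)
Definition polyBp (p : nat) (x : vec) : Prop :=
  (forall k, (k < p)%nat -> x k = C0) /\
  exists N, forall k, (N <= k)%nat -> x k = C0.

Definition l2conv (xs : nat -> vec) (x : vec) : Prop :=
  forall eps, eps > 0 -> exists N, forall n, (N <= n)%nat ->
    exists s, infinite_sum (fun k => Cnorm2 (Csub (xs n k) (x k))) s /\ s < eps.

(** inner product <u,v> = sum_k u_k conj(v_k) (linear in the first slot) *)
Definition has_inner (u v : vec) (z : C) : Prop :=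
  infinite_sum (fun k => re (Cmul (u k) (Cconj (v k)))) (re z) /\
  infinite_sum (fun k => im (Cmul (u k) (Cconj (v k)))) (im z).

(** * The matrix of H^{p,m} in the basis (e_k):
    Hmat p m j k = < H^{p,m} e_k , e_j >, read off from
    H e_k = 0                                         (k < p)
    H e_k = sqrt(k!(k+m)!)/(k-p)! e_{k+m}              (p <= k < p+m)
    H e_k = sqrt(k!(k-m)!)/(k-p-m)! e_{k-m}
            + sqrt(k!(k+m)!)/(k-p)! e_{k+m}            (k >= p+m). *)
Definition up_coef (p m k : nat) : R :=
  sqrt (INR (fact k) * INR (fact (k + m))) / INR (fact (k - p)).
Definition down_coef (p m k : nat) : R :=
  sqrt (INR (fact k) * INR (fact (k - m))) / INR (fact (k - p - m)).

Definition Hmat (p m j k : nat) : R :=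
  if Nat.ltb k p then 0
  else if Nat.ltb k (p + m) then
    (if Nat.eqb j (k + m) then up_coef p m k else 0)
  else
    (if Nat.eqb (j + m) k then down_coef p m k else 0)
    + (if Nat.eqb j (k + m) then up_coef p m k else 0).

(** action of H^{p,m} on a coefficient sequence (used on polynomials):
    (H x)_j = sum_k Hmat j k x_k ; only k = j +- m contribute, so k <= j+m. *)
Definition Happly (p m : nat) (x : vec) : vec := fun j =>
  mkC (sum_f_R0 (fun k => Hmat p m j k * re (x k)) (j + m))
      (sum_f_R0 (fun k => Hmat p m j k * im (x k)) (j + m)).

(** graph of the minimal operator: closure in B_p x B_p of the graph of
    H^{p,m} restricted to the polynomials of B_p *)
Definition Hmin (p m : nat) (x y : vec) : Prop :=
  inBp p x /\ inBp p y /\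
  exists xs : nat -> vec,
    (forall n, polyBp p (xs n)) /\ l2conv xs x /\ l2conv (fun n => Happly p m (xs n)) y.

(** deficiency subspace ker(T^* - s i I) for T = Hmin, s = +1 or -1:
    y in B_p with <T x, y> = <x, s i y> for all x in dom T. *)
Definition deficiency_space (p m : nat) (s : R) (y : vec) : Prop :=
  inBp p y /\
  forall x w, Hmin p m x w ->
    exists z, has_inner w y z /\ has_inner x (fun k => Cmul (mkC 0 s) (y k)) z.

Definition has_dim (P : vec -> Prop) (n : nat) : Prop :=
  exists f : nat -> vec,
    (forall i, (i < n)%nat -> P (f i)) /\
    (forall c : nat -> C,
        (forall k, Csum (fun i => Cmul (c i) (f i k)) n = C0) ->
        forall i, (i < n)%nat -> c i = C0) /\
    (forall y, P y -> exists c : nat -> C,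
        forall k, y k = Csum (fun i => Cmul (c i) (f i k)) n).

(* Main.v *)
Require Import Defs.
From Stdlib Require Import Reals Lra Lia Arith Psatz ClassicalEpsilon.
Open Scope R_scope.

Module A.
Open Scope R_scope.

Lemma sum_le_total f F : (forall k, 0 <= f k) -> infinite_sum f F ->
  forall n, sum_f_R0 f n <= F.
Proof. intros H1 H2 n. apply sum_incr; auto. Qed.

Lemma is_sum_ext f g l : (forall k, f k = g k) -> infinite_sum f l -> infinite_sum g l.
Proof.
  intros H S eps He. destruct (S eps He) as [N HN]. exists N. intros n Hn.
  rewrite <- (sum_eq f g n) by auto. apply HN; auto.
Qed.

Lemma is_sum_plus f g a b : infinite_sum f a -> infinite_sum g b ->
  infinite_sum (fun k => f k + g k) (a + b).
Proof.
  intros Ha Hb. unfold infinite_sum.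
  assert (H := CV_plus _ _ _ _ Ha Hb). intros eps He. destruct (H eps He) as [N HN].
  exists N. intros n Hn. rewrite plus_sum. apply HN; auto.
Qed.

Lemma is_sum_scal f a c : infinite_sum f a -> infinite_sum (fun k => c * f k) (c * a).
Proof.
  intros Ha. assert (Hc : Un_cv (fun _ : nat => c) c).
  { intros eps He. exists 0%nat. intros. unfold Rdist. rewrite Rminus_diag, Rabs_R0. lra. }
  assert (H := CV_mult _ _ _ _ Hc Ha). intros eps He. destruct (H eps He) as [N HN].
  exists N. intros n Hn. rewrite (sum_eq _ (fun k => f k * c)) by (intros; ring).
  rewrite <- scal_sum. apply HN; auto.
Qed.

Lemma is_sum_bounded f B : (forall k, 0 <= f k) -> (forall n, sum_f_R0 f n <= B) ->
  exists l, infinite_sum f l.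
Proof.
  intros H1 H2. destruct (growing_cv (sum_f_R0 f)) as [l Hl].
  - intro n. simpl. specialize (H1 (S n)). lra.
  - exists B. intros x [n ->]. auto.
  - exists l. exact Hl.
Qed.

Lemma is_sum_le f g G : (forall k, 0 <= f k <= g k) -> infinite_sum g G ->
  exists F, infinite_sum f F /\ F <= G /\ 0 <= F.
Proof.
  intros H HG. destruct (Rseries_CV_comp f g H (exist _ G HG)) as [F HF].
  exists F. split; [exact HF|]. split.
  - eapply Rle_cv_lim; [|exact HF|exact HG].
    intro n. induction n; simpl; [apply H|]. specialize (H (S n)). lra.
  - apply Rle_trans with (sum_f_R0 f 0). simpl; apply H. apply sum_incr; auto. apply H.
Qed.

Lemma abs_between x b : Rabs x <= b -> -b <= x <= b.
Proof. unfold Rabs; destruct (Rcase_abs x); lra. Qed.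

Lemma is_sum_abs f g G : (forall k, Rabs (f k) <= g k) -> infinite_sum g G ->
  exists F, infinite_sum f F /\ Rabs F <= G.
Proof.
  intros H HG.
  assert (H2 : infinite_sum (fun k => 2 * g k) (2 * G)) by (apply is_sum_scal; auto).
  destruct (is_sum_le (fun k => f k + g k) (fun k => 2 * g k) (2*G)) as [F1 [HF1 [HF1b HF1c]]]; auto.
  { intro k. specialize (H k). apply abs_between in H. lra. }
  exists (F1 + (-1) * G). split.
  - apply is_sum_ext with (fun k => (f k + g k) + (-1) * g k). intro; ring.
    apply is_sum_plus; auto. apply is_sum_scal; auto.
  - assert (0 <= G).
    { apply Rle_trans with (sum_f_R0 g 0). simpl. specialize (H 0%nat). pose proof (Rabs_pos (f 0%nat)). lra.
      apply sum_incr; auto. intro k. specialize (H k). pose proof (Rabs_pos (f k)). lra. }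
    apply Rabs_le. lra.
Qed.

Lemma is_sum_finite f N : (forall k, (N <= k)%nat -> f k = 0) -> infinite_sum f (sum_f_R0 f N).
Proof.
  intros H eps He. exists N. intros n Hn.
  replace (sum_f_R0 f n) with (sum_f_R0 f N). unfold Rdist. rewrite Rminus_diag, Rabs_R0. lra.
  induction n. replace N with 0%nat by lia. auto.
  destruct (Nat.eq_dec N (S n)). subst; auto.
  simpl. rewrite H by lia. rewrite <- IHn by lia. ring.
Qed.

Lemma is_sum_zero : infinite_sum (fun _ => 0) 0.
Proof.
  pose proof (is_sum_finite (fun _ => 0) 0 (fun _ _ => eq_refl)) as H. simpl in H. exact H.
Qed.

End A.
Import A.

Module B.
Open Scope R_scope.

Lemma Rdiv_le_0_compat a b : 0 <= a -> 0 < b -> 0 <= a / b.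
Proof. intros. unfold Rdiv. apply Rmult_le_pos; auto. left; apply Rinv_0_lt_compat; auto. Qed.

Lemma Ceq a b : re a = re b -> im a = im b -> a = b.
Proof. destruct a, b; simpl; intros; subst; auto. Qed.

Lemma Cnorm2_pos a : 0 <= Cnorm2 a.
Proof. unfold Cnorm2. nra. Qed.

Lemma Cnorm2_tri a b c : Cnorm2 (Csub a c) <= 2 * Cnorm2 (Csub a b) + 2 * Cnorm2 (Csub b c).
Proof. unfold Cnorm2, Csub; simpl.
  pose proof (Rle_0_sqr (re a - 2 * re b + re c)). pose proof (Rle_0_sqr (im a - 2 * im b + im c)).
  unfold Rsqr in *. lra. Qed.

Lemma dist_tri u v w s1 s2 :
  infinite_sum (fun k => Cnorm2 (Csub (u k) (v k))) s1 ->
  infinite_sum (fun k => Cnorm2 (Csub (v k) (w k))) s2 ->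
  exists s, infinite_sum (fun k => Cnorm2 (Csub (u k) (w k))) s /\ s <= 2 * s1 + 2 * s2.
Proof.
  intros H1 H2.
  destruct (is_sum_le (fun k => Cnorm2 (Csub (u k) (w k)))
     (fun k => 2 * Cnorm2 (Csub (u k) (v k)) + 2 * Cnorm2 (Csub (v k) (w k))) (2*s1+2*s2))
   as [F [HF [HF2 _]]].
  - intro k. split. apply Cnorm2_pos. apply Cnorm2_tri.
  - apply is_sum_plus; apply is_sum_scal; auto.
  - exists F; auto.
Qed.

Lemma l2_of_conv xs x : l2conv xs x -> (forall n, l2 (xs n)) -> l2 x.
Proof.
  intros Hc Hl. destruct (Hc 1 ltac:(lra)) as [N HN]. destruct (HN N (le_n _)) as [s [Hs _]].
  destruct (Hl N) as [t Ht].
  destruct (is_sum_le (fun k => Cnorm2 (x k))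
     (fun k => 2 * Cnorm2 (xs N k) + 2 * Cnorm2 (Csub (xs N k) (x k))) (2*t+2*s))
   as [F [HF _]].
  - intro k. split. apply Cnorm2_pos. unfold Cnorm2, Csub; simpl.
    pose proof (Rle_0_sqr (2 * re (xs N k) - re (x k))).
    pose proof (Rle_0_sqr (2 * im (xs N k) - im (x k))). unfold Rsqr in *. lra.
  - apply is_sum_plus; apply is_sum_scal; auto.
  - exists F; auto.
Qed.

Lemma sum_term_le f s k : (forall k, 0 <= f k) -> infinite_sum f s -> f k <= s.
Proof.
  intros H1 H2. apply Rle_trans with (sum_f_R0 f k).
  - destruct k. simpl; lra. simpl. assert (0 <= sum_f_R0 f k).
    { clear H2. induction k. simpl; auto. simpl. specialize (H1 (S k)). lra. }
    lra.
  - apply sum_le_total; auto.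
Qed.

Lemma abs_lt_sq x e : 0 < e -> x * x < e * e -> Rabs x < e.
Proof. intros. unfold Rabs; destruct (Rcase_abs x); nra. Qed.

Lemma l2conv_coord xs x k : l2conv xs x ->
  Un_cv (fun n => re (xs n k)) (re (x k)) /\ Un_cv (fun n => im (xs n k)) (im (x k)).
Proof.
  intros H. split; intros eps He; destruct (H (eps*eps) ltac:(nra)) as [N HN]; exists N;
  intros n Hn; destruct (HN n Hn) as [s [Hs Hs2]];
  pose proof (sum_term_le _ _ k (fun k => Cnorm2_pos _) Hs) as Hk;
  unfold Cnorm2, Csub in Hk; simpl in Hk; unfold Rdist; apply abs_lt_sq; auto;
  pose proof (Rle_0_sqr (re (xs n k) - re (x k))); pose proof (Rle_0_sqr (im (xs n k) - im (x k)));
  unfold Rsqr in *; lra.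
Qed.

Lemma sumsq_nonneg (x : vec) A : infinite_sum (fun k => Cnorm2 (x k)) A -> 0 <= A.
Proof. intros H. apply Rle_trans with (Cnorm2 (x 0%nat)). apply Cnorm2_pos.
  apply (sum_term_le (fun k => Cnorm2 (x k))); auto using Cnorm2_pos. Qed.

Definition ipc (b : bool) (u v : Defs.C) : R :=
  if b then re u * re v + im u * im v else im u * re v - re u * im v.

Lemma has_inner_ipc u v z : has_inner u v z <->
  infinite_sum (fun k => ipc true (u k) (v k)) (re z) /\
  infinite_sum (fun k => ipc false (u k) (v k)) (im z).
Proof.
  unfold has_inner. split; intros [H1 H2]; split; (eapply is_sum_ext; [|eassumption]);
  intro k; unfold ipc, Cmul, Cconj; simpl; ring.
Qed.

Lemma ipc_bound b u v T : 0 < T -> Rabs (ipc b u v) <= (T * Cnorm2 u + Cnorm2 v / T) / 2.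
Proof.
  intros HT. apply Rabs_le. unfold ipc, Cnorm2.
  set (a := re u); set (c := im u); set (d := re v); set (e := im v).
  assert (E : forall x y, Rabs (x*y) <= (T*x*x + y*y/T)/2).
  { intros x y. apply Rabs_le.
    assert (0 <= (T*x - y)*(T*x-y)/T) by (apply Rdiv_le_0_compat; [apply Rle_0_sqr|lra]).
    assert (0 <= (T*x + y)*(T*x+y)/T) by (apply Rdiv_le_0_compat; [apply Rle_0_sqr|lra]).
    assert (Hx: (T*x - y)*(T*x-y)/T = T*x*x - 2*(x*y) + y*y/T) by (field; lra).
    assert (Hy: (T*x + y)*(T*x+y)/T = T*x*x + 2*(x*y) + y*y/T) by (field; lra).
    lra. }
  assert (Hd: (T * (a*a+c*c) + (d*d+e*e)/T)/2 = (T*a*a + d*d/T)/2 + (T*c*c+e*e/T)/2) by (field; lra).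
  assert (Hd2: (T * (a*a+c*c) + (d*d+e*e)/T)/2 = (T*c*c + d*d/T)/2 + (T*a*a+e*e/T)/2) by (field; lra).
  destruct b; rewrite Hd || rewrite Hd2.
  - pose proof (E a d); pose proof (E c e). apply abs_between in H, H0. lra.
  - pose proof (E c d); pose proof (E a e). apply abs_between in H, H0. lra.
Qed.

Lemma ipc_sym b u v : Rabs (ipc b u v) = Rabs (ipc b v u).
Proof.
  destruct b; unfold ipc. f_equal; ring.
  replace (im v * re u - re v * im u) with (-(im u * re v - re u * im v)) by ring. symmetry; apply Rabs_Ropp.
Qed.

Lemma ip_exists u v b : l2 u -> l2 v -> exists z, infinite_sum (fun k => ipc b (u k) (v k)) z.
Proof.
  intros [A HA] [B HB].
  destruct (is_sum_abs (fun k => ipc b (u k) (v k)) (fun k => (1 * Cnorm2 (u k) + Cnorm2 (v k) / 1)/2)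
    ((1*A + B/1)/2)) as [F [HF _]].
  - intro; apply ipc_bound; lra.
  - apply is_sum_ext with (fun k => /2 * (1 * Cnorm2 (u k) + / 1 * Cnorm2 (v k))).
    intro; field. replace ((1*A+B/1)/2) with (/2 * (1*A + /1 * B)) by field.
    apply is_sum_scal, is_sum_plus; apply is_sum_scal; auto.
  - exists F; auto.
Qed.

Lemma has_inner_exists u v : l2 u -> l2 v -> exists z, has_inner u v z.
Proof.
  intros Hu Hv. destruct (ip_exists u v true Hu Hv) as [r Hr].
  destruct (ip_exists u v false Hu Hv) as [i Hi]. exists (mkC r i). apply has_inner_ipc; auto.
Qed.

Lemma ip_cont b an a bn bb Z Z0 :
  l2conv an a -> l2conv bn bb -> l2 a -> l2 bb ->
  (forall n, infinite_sum (fun k => ipc b (an n k) (bn n k)) (Z n)) ->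
  infinite_sum (fun k => ipc b (a k) (bb k)) Z0 -> Un_cv Z Z0.
Proof.
  intros Ha Hb [A HA] [B HB] HZ HZ0 eps He.
  assert (HA0 : 0 <= A) by (eapply sumsq_nonneg; eauto).
  assert (HB0 : 0 <= B) by (eapply sumsq_nonneg; eauto).
  set (T := 2 * (A + B) / eps + 1).
  assert (HT : 1 <= T) by (unfold T; assert (0 <= 2*(A+B)/eps) by (apply Rdiv_le_0_compat; lra); lra).
  assert (HT2 : (A + B) / T < eps / 2).
  { apply Rmult_lt_reg_r with (2 * T); [lra|]. unfold T.
    replace ((A+B)/(2*(A+B)/eps+1)*(2*(2*(A+B)/eps+1))) with (2*(A+B)) by (field; split; [lra|]; 
      assert (0 <= 2*(A+B)/eps) by (apply Rdiv_le_0_compat; lra); lra).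
    replace (eps / 2 * (2 * (2 * (A + B) / eps + 1))) with (2*(A+B) + eps) by (field; lra). lra. }
  set (d := eps / (4 * (1 + T))).
  assert (Hd : 0 < d) by (unfold d; apply Rdiv_lt_0_compat; lra).
  destruct (Ha d Hd) as [N1 HN1]. destruct (Hb d Hd) as [N2 HN2].
  exists (max N1 N2). intros n Hn.
  destruct (HN1 n ltac:(lia)) as [sa [Hsa Hsa2]]. destruct (HN2 n ltac:(lia)) as [sb [Hsb Hsb2]].
  assert (Hsa0 : 0 <= sa) by (eapply (sumsq_nonneg (fun k => Csub (an n k) (a k))); eauto).
  assert (Hsb0 : 0 <= sb) by (eapply (sumsq_nonneg (fun k => Csub (bn n k) (bb k))); eauto).
  set (g := fun k => ((1 + T) * (Cnorm2 (Csub (an n k) (a k)) + Cnorm2 (Csub (bn n k) (bb k)))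
                     + (Cnorm2 (a k) + Cnorm2 (bb k)) / T) / 2).
  destruct (is_sum_abs (fun k => ipc b (an n k) (bn n k) + (-1) * ipc b (a k) (bb k)) g
      (((1+T)*(sa+sb) + (A+B)/T)/2)) as [F [HF HF2]].
  - intro k. unfold g.
    set (da := Csub (an n k) (a k)). set (db := Csub (bn n k) (bb k)).
    assert (E : ipc b (an n k) (bn n k) + (-1) * ipc b (a k) (bb k) =
       ipc b da db + ipc b da (bb k) + ipc b db (a k) * (if b then 1 else -1)).
    { unfold da, db, ipc, Csub; destruct b; simpl; ring. }
    rewrite E. eapply Rle_trans. apply Rabs_triang. eapply Rle_trans.
    apply Rplus_le_compat_r. apply Rabs_triang.
    rewrite Rabs_mult. replace (Rabs (if b then 1 else -1)) with 1 by (destruct b; unfold Rabs; destruct Rcase_abs; lra).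
    pose proof (ipc_bound b da db 1 ltac:(lra)).
    pose proof (ipc_bound b da (bb k) T ltac:(lra)).
    pose proof (ipc_bound b db (a k) T ltac:(lra)).
    pose proof (Cnorm2_pos da). pose proof (Cnorm2_pos db).
    assert (Cnorm2 da <= T * Cnorm2 da) by nra.
    assert (Cnorm2 db <= T * Cnorm2 db) by nra.
    assert (E2 : ((1 + T) * (Cnorm2 da + Cnorm2 db) + (Cnorm2 (a k) + Cnorm2 (bb k)) / T) / 2
      = (T * Cnorm2 da + Cnorm2 (bb k) / T)/2 + (T * Cnorm2 db + Cnorm2 (a k) / T)/2 
        + (Cnorm2 da + Cnorm2 db)/2) by (field; lra).
    rewrite E2. replace (Cnorm2 da / 1) with (Cnorm2 da) in * by field.
    replace (Cnorm2 db / 1) with (Cnorm2 db) in * by field. lra.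
  - unfold g. apply is_sum_ext with (fun k => /2 * ((1+T) * (Cnorm2 (Csub (an n k) (a k)) + Cnorm2 (Csub (bn n k) (bb k))) + /T * (Cnorm2 (a k) + Cnorm2 (bb k)))).
    intro; field; lra.
    replace (((1 + T) * (sa + sb) + (A + B) / T) / 2) with (/2 * ((1+T)*(sa+sb) + /T * (A+B))) by (field; lra).
    apply is_sum_scal, is_sum_plus; apply is_sum_scal, is_sum_plus; auto.
  - assert (HF3 : F = Z n + (-1) * Z0).
    { eapply uniqueness_sum. exact HF. apply is_sum_plus; auto. apply is_sum_scal; auto. }
    unfold Rdist. replace (Z n - Z0) with F by lra.
    eapply Rle_lt_trans. exact HF2.
    assert ((1+T)*(sa+sb) < (1+T) * (2 * d)) by (apply Rmult_lt_compat_l; lra).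
    assert ((1+T)*(2*d) = eps/2) by (unfold d; field; lra).
    lra.
Qed.

Lemma lim_eq Z W z w : (forall n, Z n = W n) -> Un_cv Z z -> Un_cv W w -> z = w.
Proof.
  intros H HZ HW. eapply UL_sequence. exact HZ. intros eps He. destruct (HW eps He) as [N HN].
  exists N. intros n Hn. rewrite H. auto.
Qed.

End B.
Import B.

Module C.
Open Scope R_scope.

Section HM.
Variables (p m : nat).
Hypothesis hm : (1 <= m)%nat.

Definition up k := up_coef p m k.
Definition upc j := if Nat.leb p j then up j else 0.
Definition dn j := if Nat.leb (p + m) j then up (j - m) else 0.

Definition Hc j k : R :=
  (if Nat.eqb j (k + m) then upc k else 0) + (if Nat.eqb (j + m) k then upc j else 0).

Lemma down_up k : (p + m <= k)%nat -> down_coef p m k = up (k - m).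
Proof.
  intros H. unfold down_coef, up, up_coef.
  replace (k - m + m)%nat with k by lia. replace (k - p - m)%nat with (k - m - p)%nat by lia.
  rewrite (Rmult_comm (INR (fact k))). reflexivity.
Qed.

Lemma Hmat_Hc j k : Hmat p m j k = Hc j k.
Proof.
  unfold Hmat, Hc, upc.
  destruct (Nat.ltb_spec k p); destruct (Nat.ltb_spec k (p+m));
  destruct (Nat.eqb_spec j (k+m)); destruct (Nat.eqb_spec (j+m) k);
  destruct (Nat.leb_spec p k); destruct (Nat.leb_spec p j); try lia; try ring;
  try (rewrite down_up by lia; replace (k - m)%nat with j by lia; ring).
  all: unfold up; ring.
Qed.

Lemma Hc_sym j k : Hc j k = Hc k j.
Proof.
  unfold Hc. rewrite (Nat.eqb_sym j (k+m)), (Nat.eqb_sym (j+m) k). ring.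
Qed.

Lemma sum_zero f n : (forall k, (k <= n)%nat -> f k = 0) -> sum_f_R0 f n = 0.
Proof. intros H. induction n; simpl. apply H; lia. rewrite IHn, H by (auto; lia). ring. Qed.

Lemma sum_delta f n a : (forall k, k <> a -> f k = 0) -> (a <= n)%nat -> sum_f_R0 f n = f a.
Proof.
  intros H Ha. induction n.
  - replace a with 0%nat by lia. reflexivity.
  - simpl. destruct (Nat.eq_dec a (S n)).
    + subst. rewrite sum_zero. ring. intros; apply H; lia.
    + rewrite IHn by lia. rewrite (H (S n)) by lia. ring.
Qed.

Lemma Happly_row (v : nat -> R) j :
  sum_f_R0 (fun k => Hmat p m j k * v k) (j + m) = upc j * v (j + m)%nat + dn j * v (j - m)%nat.
Proof.
  rewrite (sum_eq _ (fun k => (if Nat.eqb j (k + m) then upc k else 0) * v k +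
                              (if Nat.eqb (j + m) k then upc j else 0) * v k))
    by (intros; rewrite Hmat_Hc; unfold Hc; ring).
  rewrite plus_sum. rewrite Rplus_comm. f_equal.
  - rewrite (sum_delta _ _ (j+m)). rewrite Nat.eqb_refl. auto.
    intros k Hk. destruct (Nat.eqb_spec (j+m) k); [lia|ring]. lia.
  - unfold dn. destruct (Nat.leb_spec (p+m) j).
    + rewrite (sum_delta _ _ (j-m)). replace (j - m + m)%nat with j by lia. rewrite Nat.eqb_refl.
      unfold upc. destruct (Nat.leb_spec p (j-m)); [auto|lia].
      intros k Hk. destruct (Nat.eqb_spec j (k+m)); [lia|ring]. lia.
    + rewrite Rmult_0_l. apply sum_zero. intros k Hk. destruct (Nat.eqb_spec j (k+m)); [|ring].
      unfold upc. destruct (Nat.leb_spec p k); [lia|ring].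
Qed.

Definition Cscale (r : R) (z : Defs.C) : Defs.C := mkC (r * re z) (r * im z).

Lemma Happly_eq x j : Happly p m x j = Cadd (Cscale (upc j) (x (j + m)%nat)) (Cscale (dn j) (x (j - m)%nat)).
Proof.
  unfold Happly. apply Ceq; simpl; apply (Happly_row (fun k => _ (x k))).
Qed.

Lemma dn_shift j : dn (j + m) = upc j.
Proof.
  unfold dn, upc. replace (j + m - m)%nat with j by lia.
  destruct (Nat.leb_spec (p+m) (j+m)); destruct (Nat.leb_spec p j); auto; lia.
Qed.

Lemma dn_small k : (k < m)%nat -> dn k = 0.
Proof. intros. unfold dn. destruct (Nat.leb_spec (p+m) k); auto; lia. Qed.

Lemma upc_small k : (k < p)%nat -> upc k = 0.
Proof. intros. unfold upc. destruct (Nat.leb_spec p k); auto; lia. Qed.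
Lemma dn_small2 k : (k < p + m)%nat -> dn k = 0.
Proof. intros. unfold dn. destruct (Nat.leb_spec (p+m) k); auto; lia. Qed.

Lemma Happly_low x j : (j < p)%nat -> Happly p m x j = C0.
Proof.
  intros H. rewrite Happly_eq, upc_small, dn_small2 by lia. apply Ceq; simpl; ring.
Qed.

Lemma sum_shift (G : nat -> R) n : (forall k, (k < m)%nat -> G k = 0) ->
  sum_f_R0 G (n + m) = sum_f_R0 (fun j => G (j + m)%nat) n.
Proof.
  intros H. induction n.
  - simpl. replace (sum_f_R0 G m) with (sum_f_R0 G (S (m-1))) by (f_equal; lia). simpl.
    rewrite sum_zero by (intros; apply H; lia). replace (S (m-1)) with m by lia. ring.
  - replace (S n + m)%nat with (S (n + m)) by lia. simpl. rewrite IHn. reflexivity.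
Qed.

Lemma is_sum_shift (G : nat -> R) S : (forall k, (k < m)%nat -> G k = 0) ->
  infinite_sum (fun j => G (j + m)%nat) S -> infinite_sum G S.
Proof.
  intros H HS eps He. destruct (HS eps He) as [N HN]. exists (N + m)%nat. intros n Hn.
  replace n with ((n - m) + m)%nat by lia. rewrite sum_shift by auto. apply HN. lia.
Qed.

Lemma ipc_lin_l b c x d y z : ipc b (Cadd (Cscale c x) (Cscale d y)) z = c * ipc b x z + d * ipc b y z.
Proof. destruct b; unfold ipc, Cadd, Cscale; simpl; ring. Qed.
Lemma ipc_lin_r b c x d y z : ipc b z (Cadd (Cscale c x) (Cscale d y)) = c * ipc b z x + d * ipc b z y.
Proof. destruct b; unfold ipc, Cadd, Cscale; simpl; ring. Qed.

Lemma poly_sym b (a w : vec) N : (forall k, (N <= k)%nat -> a k = C0) ->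
  exists S, infinite_sum (fun j => ipc b (Happly p m a j) (w j)) S /\
            infinite_sum (fun k => ipc b (a k) (Happly p m w k)) S.
Proof.
  intros Ha.
  set (T1 := fun j => upc j * ipc b (a (j + m)%nat) (w j)).
  set (R2 := fun k => upc k * ipc b (a k) (w (k + m)%nat)).
  assert (H0 : forall z, ipc b C0 z = 0) by (intros; destruct b; unfold ipc; simpl; ring).
  assert (HT1 : infinite_sum T1 (sum_f_R0 T1 N)).
  { apply is_sum_finite. intros k Hk. unfold T1. rewrite Ha by lia. rewrite H0. ring. }
  assert (HR2 : infinite_sum R2 (sum_f_R0 R2 N)).
  { apply is_sum_finite. intros k Hk. unfold R2. rewrite Ha by lia. rewrite H0. ring. }
  exists (sum_f_R0 T1 N + sum_f_R0 R2 N). split.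
  - apply is_sum_ext with (fun j => T1 j + dn j * ipc b (a (j - m)%nat) (w j)).
    { intro j. rewrite Happly_eq, ipc_lin_l. reflexivity. }
    apply is_sum_plus; auto. apply is_sum_shift.
    { intros k Hk. rewrite dn_small by auto. ring. }
    eapply is_sum_ext; [|exact HR2]. intro k. unfold R2. rewrite dn_shift.
    replace (k + m - m)%nat with k by lia. reflexivity.
  - apply is_sum_ext with (fun k => dn k * ipc b (a k) (w (k - m)%nat) + R2 k).
    { intro k. rewrite Happly_eq, ipc_lin_r. unfold R2. ring. }
    apply is_sum_plus; auto. apply is_sum_shift.
    { intros k Hk. rewrite dn_small by auto. ring. }
    eapply is_sum_ext; [|exact HT1]. intro k. unfold T1. rewrite dn_shift.
    replace (k + m - m)%nat with k by lia. reflexivity.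
Qed.

End HM.

End C.
Import C.

Module D.
Open Scope R_scope.

Lemma CV_const c : Un_cv (fun _ : nat => c) c.
Proof. intros eps He. exists 0%nat. intros. unfold Rdist. rewrite Rminus_diag, Rabs_R0. lra. Qed.

Lemma Un_cv_ext f g l : (forall n, f n = g n) -> Un_cv f l -> Un_cv g l.
Proof. intros H S eps He. destruct (S eps He) as [N HN]. exists N. intros. rewrite <- H. auto. Qed.

Lemma l2conv_const v : l2conv (fun _ => v) v.
Proof.
  intros eps He. exists 0%nat. intros n _. exists 0. split; [|lra].
  eapply is_sum_ext; [|exact is_sum_zero]. intro k. unfold Cnorm2, Csub; simpl. ring.
Qed.

Lemma inBp_l2 p x : inBp p x -> l2 x.
Proof. intros [H _]; auto. Qed.

Section P.
Variables (p m : nat).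
Hypothesis hm : (1 <= m)%nat.

Lemma Hmin_coord x y : Hmin p m x y -> forall j, y j = Happly p m x j.
Proof.
  intros [_ [_ [xs [Hp [Hx Hy]]]]] j.
  destruct (l2conv_coord _ _ j Hy) as [Hr Hi].
  destruct (l2conv_coord _ _ (j+m) Hx) as [Hr1 Hi1].
  destruct (l2conv_coord _ _ (j-m) Hx) as [Hr2 Hi2].
  rewrite (Happly_eq p m hm x j). apply Ceq; simpl.
  - eapply UL_sequence. exact Hr.
    eapply Un_cv_ext; [|apply CV_plus; apply CV_mult; [apply CV_const|exact Hr1|apply CV_const|exact Hr2]].
    intro n. cbv beta. rewrite (Happly_eq p m hm (xs n) j). reflexivity.
  - eapply UL_sequence. exact Hi.
    eapply Un_cv_ext; [|apply CV_plus; apply CV_mult; [apply CV_const|exact Hi1|apply CV_const|exact Hi2]].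
    intro n. cbv beta. rewrite (Happly_eq p m hm (xs n) j). reflexivity.
Qed.
End P.

Definition close (u v : vec) (eps : R) := exists s, infinite_sum (fun k => Cnorm2 (Csub (u k) (v k))) s /\ s < eps.

Lemma conv_zero_below p xs x : l2conv xs x -> (forall n k, (k < p)%nat -> xs n k = C0) ->
  forall k, (k < p)%nat -> x k = C0.
Proof.
  intros H Hz k Hk. destruct (l2conv_coord _ _ k H) as [H1 H2]. apply Ceq; simpl.
  - eapply UL_sequence. exact H1. eapply Un_cv_ext; [|apply CV_const]. intro n. rewrite Hz; auto.
  - eapply UL_sequence. exact H2. eapply Un_cv_ext; [|apply CV_const]. intro n. rewrite Hz; auto.
Qed.

Lemma approx p m a b : Hmin p m a b -> forall eps, eps > 0 ->
  exists P, polyBp p P /\ close P a eps /\ close (Happly p m P) b eps.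
Proof.
  intros [_ [_ [zs [Hp [H1 H2]]]]] eps He.
  destruct (H1 eps He) as [N1 HN1]. destruct (H2 eps He) as [N2 HN2].
  exists (zs (max N1 N2)). split; auto. split; [apply HN1|apply HN2]; lia.
Qed.

Lemma close_tri u v w e1 e2 : close u v e1 -> close v w e2 -> close u w (2*e1 + 2*e2).
Proof.
  intros [s1 [H1 H1']] [s2 [H2 H2']]. destruct (B.dist_tri u v w s1 s2 H1 H2) as [s [Hs Hs']].
  exists s. split; auto. lra.
Qed.

Lemma close_mono u v e1 e2 : close u v e1 -> e1 <= e2 -> close u v e2.
Proof. intros [s [H1 H2]] H. exists s. split; auto; lra. Qed.

Lemma Hmin_closed p m (xs ys : nat -> vec) x y :
  (forall n, Hmin p m (xs n) (ys n)) -> l2conv xs x -> l2conv ys y -> Hmin p m x y.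
Proof.
  intros HH Hx Hy.
  assert (Ax : forall n : nat, exists P, polyBp p P /\ close P (xs n) (/ (INR n + 1)) /\
                 close (Happly p m P) (ys n) (/ (INR n + 1))).
  { intro n. apply approx. auto. apply Rinv_0_lt_compat. pose proof (pos_INR n). lra. }
  set (Q := fun n => proj1_sig (constructive_indefinite_description _ (Ax n))).
  assert (HQ : forall n, polyBp p (Q n) /\ close (Q n) (xs n) (/ (INR n + 1)) /\
                 close (Happly p m (Q n)) (ys n) (/ (INR n + 1))).
  { intro n. unfold Q. destruct (constructive_indefinite_description _ (Ax n)). auto. }
  split; [|split].
  - split. apply (l2_of_conv xs); auto. intro n; destruct (HH n) as [[? _] _]; auto.
    apply (conv_zero_below p xs); auto. intros n k Hk. destruct (HH n) as [[_ H] _]; auto.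
  - split. apply (l2_of_conv ys); auto. intro n; destruct (HH n) as [_ [[? _] _]]; auto.
    apply (conv_zero_below p ys); auto. intros n k Hk. destruct (HH n) as [_ [[_ H] _]]; auto.
  - exists Q. split; [intro n; apply HQ|].
    assert (Small : forall eps, eps > 0 -> exists M, forall n, (M <= n)%nat -> / (INR n + 1) < eps).
    { intros eps He. destruct (archimed_cor1 eps He) as [M [HM1 HM2]]. exists M. intros n Hn.
      eapply Rle_lt_trans; [|exact HM1]. apply Rinv_le_contravar. apply lt_0_INR; lia.
      apply le_INR in Hn. lra. }
    split.
    + intros eps He. destruct (Small (eps/4) ltac:(lra)) as [M HM]. destruct (Hx (eps/4) ltac:(lra)) as [N HN].
      exists (max M N). intros n Hn.
      destruct (HQ n) as [_ [Hc _]].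
      apply close_mono with (2 * / (INR n + 1) + 2 * (eps/4)).
      eapply close_tri; [exact Hc|]. apply HN; lia.
      specialize (HM n ltac:(lia)). lra.
    + intros eps He. destruct (Small (eps/4) ltac:(lra)) as [M HM]. destruct (Hy (eps/4) ltac:(lra)) as [N HN].
      exists (max M N). intros n Hn.
      destruct (HQ n) as [_ [_ Hc]].
      assert (Hc2 : close (Happly p m (Q n)) y (2 * / (INR n + 1) + 2 * (eps/4))).
      { eapply close_tri; [exact Hc|]. apply HN; lia. }
      specialize (HM n ltac:(lia)). destruct Hc2 as [s [Hs1 Hs2]]. exists s. split; auto. lra.
Qed.

Lemma lim_ip_eq b an a bn bb cn c dn d :
  l2conv an a -> l2conv bn bb -> l2conv cn c -> l2conv dn d ->
  l2 a -> l2 bb -> l2 c -> l2 d ->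
  (forall n, exists S, infinite_sum (fun k => ipc b (an n k) (bn n k)) S /\
                       infinite_sum (fun k => ipc b (cn n k) (dn n k)) S) ->
  exists Z0, infinite_sum (fun k => ipc b (a k) (bb k)) Z0 /\
             infinite_sum (fun k => ipc b (c k) (d k)) Z0.
Proof.
  intros H1 H2 H3 H4 L1 L2 L3 L4 HS.
  set (Z := fun n => proj1_sig (constructive_indefinite_description _ (HS n))).
  assert (HZ : forall n, infinite_sum (fun k => ipc b (an n k) (bn n k)) (Z n) /\
                       infinite_sum (fun k => ipc b (cn n k) (dn n k)) (Z n)).
  { intro n. unfold Z. destruct (constructive_indefinite_description _ (HS n)). auto. }
  destruct (ip_exists a bb b L1 L2) as [Z0 HZ0]. destruct (ip_exists c d b L3 L4) as [W0 HW0].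
  exists Z0. split; auto. replace Z0 with W0; auto.
  eapply UL_sequence.
  - apply (ip_cont b cn c dn d Z W0); auto. intro n; apply HZ.
  - apply (ip_cont b an a bn bb Z Z0); auto. intro n; apply HZ.
Qed.

Lemma lim_inner_eq an a bn bb cn c dn d :
  l2conv an a -> l2conv bn bb -> l2conv cn c -> l2conv dn d ->
  l2 a -> l2 bb -> l2 c -> l2 d ->
  (forall b n, exists S, infinite_sum (fun k => ipc b (an n k) (bn n k)) S /\
                       infinite_sum (fun k => ipc b (cn n k) (dn n k)) S) ->
  exists z, has_inner a bb z /\ has_inner c d z.
Proof.
  intros.
  destruct (lim_ip_eq true an a bn bb cn c dn d) as [r [Hr1 Hr2]]; auto.
  destruct (lim_ip_eq false an a bn bb cn c dn d) as [i [Hi1 Hi2]]; auto.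
  exists (mkC r i). split; apply has_inner_ipc; simpl; auto.
Qed.

Lemma poly_fin p (a : vec) : polyBp p a -> exists N, forall k, (N <= k)%nat -> a k = C0.
Proof. intros [_ H]; auto. Qed.

Lemma Hmin_sym p m (hm : (1 <= m)%nat) x y x' y' : Hmin p m x y -> Hmin p m x' y' ->
  exists z, has_inner y x' z /\ has_inner x y' z.
Proof.
  intros H1 H2. pose proof H1 as [Lx [Ly [xs [Pxs [Cx Cy]]]]].
  pose proof H2 as [Lx' [Ly' [xs' [Pxs' [Cx' Cy']]]]].
  apply (lim_inner_eq (fun n => Happly p m (xs n)) y xs' x' xs x (fun n => Happly p m (xs' n)) y');
    try assumption; try (apply (inBp_l2 p); assumption).
  intros b n. destruct (poly_fin p (xs n) (Pxs n)) as [N HN].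
  apply (poly_sym p m hm b (xs n) (xs' n) N HN).
Qed.

End D.
Import D.

Module F.
Open Scope R_scope.

Lemma fact_bound j t : (fact j * (j + 1) ^ t <= fact (j + t))%nat.
Proof.
  induction t.
  - rewrite Nat.add_0_r. simpl. lia.
  - replace (j + S t)%nat with (S (j + t)) by lia. rewrite Nat.pow_succ_r'. simpl fact.
    assert (j + 1 <= S (j + t))%nat by lia. nia.
Qed.

Lemma fact_pos' n : 0 < INR (fact n).
Proof. apply lt_0_INR. apply lt_O_fact. Qed.

Lemma sq_le a b : 0 <= a -> 0 <= b -> a * a <= b * b -> a <= b.
Proof. intros. nra. Qed.

Section F.
Variables (p m : nat).
Hypothesis hm : (1 <= m)%nat.

Definition U k := INR (fact k) * INR (fact (k + m)) / (INR (fact (k - p)) * INR (fact (k - p))).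

Lemma up_nonneg k : 0 <= C.up p m k.
Proof.
  unfold C.up, up_coef. apply Rdiv_le_0_compat. apply sqrt_pos. apply fact_pos'.
Qed.

Lemma up_sq k : C.up p m k * C.up p m k = U k.
Proof.
  unfold C.up, up_coef, U. pose proof (fact_pos' (k-p)).
  assert (0 <= INR (fact k) * INR (fact (k+m))) by (pose proof (fact_pos' k); pose proof (fact_pos' (k+m)); nra).
  replace (sqrt (INR (fact k) * INR (fact (k + m))) / INR (fact (k - p)) *
   (sqrt (INR (fact k) * INR (fact (k + m))) / INR (fact (k - p)))) with
   ((sqrt (INR (fact k) * INR (fact (k + m))) * sqrt (INR (fact k) * INR (fact (k + m)))) /
    (INR (fact (k - p)) * INR (fact (k - p)))) by (field; lra).
  rewrite sqrt_sqrt; auto.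
Qed.

Lemma U_lower k : (3 <= 2 * p + m)%nat -> (p <= k)%nat ->
  (INR (k - p) + 1) * ((INR (k - p) + 1) * (INR (k - p) + 1)) <= U k.
Proof.
  intros H3 Hk. set (j := (k - p)%nat).
  pose proof (fact_bound j p) as F1. pose proof (fact_bound j (p + m)) as F2.
  replace (j + p)%nat with k in F1 by (unfold j; lia).
  replace (j + (p + m))%nat with (k + m)%nat in F2 by (unfold j; lia).
  assert (F3 : ((j+1)^3 <= (j+1)^(2*p+m))%nat) by (apply Nat.pow_le_mono_r; lia).
  assert (F4 : (fact j * fact j * (j+1)^3 <= fact k * fact (k+m))%nat).
  { replace (2*p+m)%nat with (p + (p+m))%nat in F3 by lia. rewrite Nat.pow_add_r in F3. nia. }
  apply le_INR in F4. rewrite !mult_INR, pow_INR in F4. rewrite plus_INR in F4. simpl INR in F4.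
  unfold U. fold j. pose proof (fact_pos' j).
  apply Rmult_le_reg_r with (INR (fact j) * INR (fact j)). nra.
  replace (INR (fact k) * INR (fact (k + m)) / (INR (fact j) * INR (fact j)) * (INR (fact j) * INR (fact j)))
    with (INR (fact k) * INR (fact (k + m))) by (field; lra).
  nra.
Qed.

Lemma up_lower k : (3 <= 2 * p + m)%nat -> (p <= k)%nat ->
  (INR (k - p) + 1) * ((INR (k - p) + 1) * (INR (k - p) + 1)) <= C.up p m k * C.up p m k.
Proof. intros. rewrite up_sq. apply U_lower; auto. Qed.

Lemma up_ge1 k : (3 <= 2 * p + m)%nat -> (p <= k)%nat -> 1 <= C.up p m k.
Proof.
  intros H3 Hk. pose proof (up_lower k H3 Hk). pose proof (pos_INR (k-p)). pose proof (up_nonneg k).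
  apply sq_le; try lra. nra.
Qed.

Definition psi x := (INR x + 1) * (INR x + INR m + 1) / ((INR (x - p) + 1) * (INR (x - p) + 1)).

Lemma U_succ x : (p <= x)%nat -> U (S x) = psi x * U x.
Proof.
  intros H. unfold U, psi.
  replace (S x - p)%nat with (S (x - p)) by lia. replace (S x + m)%nat with (S (x + m)) by lia.
  rewrite !fact_simpl. rewrite !mult_INR, !S_INR, plus_INR.
  pose proof (fact_pos' (x-p)). pose proof (pos_INR (x-p)).
  field. nra.
Qed.

Lemma psi_mono x x' : (p <= x)%nat -> (x <= x')%nat -> psi x' <= psi x.
Proof.
  intros H1 H2. unfold psi.
  assert (E1 : INR x = INR (x - p) + INR p) by (rewrite <- plus_INR; f_equal; lia).
  assert (E2 : INR x' = INR (x' - p) + INR p) by (rewrite <- plus_INR; f_equal; lia).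
  assert (E3 : INR (x - p) <= INR (x' - p)) by (apply le_INR; lia).
  rewrite E1, E2. set (a := INR (x - p) + 1). set (a' := INR (x' - p) + 1).
  replace (INR (x - p) + INR p + 1) with (a + INR p) by (unfold a; ring).
  replace (INR (x' - p) + INR p + 1) with (a' + INR p) by (unfold a'; ring).
  replace (INR (x - p) + INR p + INR m + 1) with (a + INR p + INR m) by (unfold a; ring).
  replace (INR (x' - p) + INR p + INR m + 1) with (a' + INR p + INR m) by (unfold a'; ring).
  pose proof (pos_INR (x-p)). pose proof (pos_INR p). pose proof (pos_INR m).
  assert (1 <= a) by (unfold a; lra). assert (a <= a') by (unfold a, a'; lra).
  assert (0 < a*a) by nra. assert (0 < a'*a') by nra.
  apply Rmult_le_reg_r with ((a*a)*(a'*a')). apply Rmult_lt_0_compat; auto.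
  replace ((a' + INR p) * (a' + INR p + INR m) / (a' * a') * (a * a * (a' * a'))) with
    ((a' + INR p) * (a' + INR p + INR m) * (a * a)) by (field; lra).
  replace ((a + INR p) * (a + INR p + INR m) / (a * a) * (a * a * (a' * a'))) with
    ((a + INR p) * (a + INR p + INR m) * (a' * a')) by (field; lra).
  set (P := INR p). set (Q := INR p + INR m).
  replace (a' + INR p + INR m) with (a' + Q) by (unfold Q; ring).
  replace (a + INR p + INR m) with (a + Q) by (unfold Q; ring).
  assert (0 <= Q) by (unfold Q; lra).
  assert (0 <= P) by (unfold P; lra).
  assert (0 <= a * a') by nra.
  assert (0 <= (P + Q) * (a * a')) by (apply Rmult_le_pos; lra).
  assert (0 <= (P + Q) * (a * a') * (a' - a)) by (apply Rmult_le_pos; lra).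
  assert (0 <= P * Q) by (apply Rmult_le_pos; lra).
  assert (0 <= P * Q * (a' * a' - a * a)) by (apply Rmult_le_pos; nra).
  assert (E : (a + P) * (a + Q) * (a' * a') - (a' + P) * (a' + Q) * (a * a) =
     (P + Q) * (a * a') * (a' - a) + P * Q * (a' * a' - a * a)) by ring.
  unfold Q in *. replace (a' + P + INR m) with (a' + (P + INR m)) by ring.
  replace (a + P + INR m) with (a + (P + INR m)) by ring.
  unfold P in *. lra.
Qed.

Lemma U_pos k : 0 < U k.
Proof.
  unfold U. pose proof (fact_pos' k). pose proof (fact_pos' (k+m)). pose proof (fact_pos' (k-p)).
  apply Rdiv_lt_0_compat; nra.
Qed.

Lemma psi_pos x : 0 <= psi x.
Proof.
  unfold psi. pose proof (pos_INR x). pose proof (pos_INR m). pose proof (pos_INR (x-p)).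
  apply Rdiv_le_0_compat; nra.
Qed.

Lemma U_logconc k : (p + m <= k)%nat -> U (k + m) * U (k - m) <= U k * U k.
Proof.
  intros Hk.
  assert (P : forall t, (t <= m)%nat -> U (k + t) * U (k - m) <= U k * U (k - m + t)).
  { induction t; intros Ht.
    - rewrite !Nat.add_0_r. lra.
    - replace (k + S t)%nat with (S (k + t)) by lia. replace (k - m + S t)%nat with (S (k - m + t)) by lia.
      rewrite !U_succ by lia.
      pose proof (IHt ltac:(lia)). pose proof (psi_mono (k - m + t) (k + t) ltac:(lia) ltac:(lia)).
      pose proof (U_pos (k+t)). pose proof (U_pos (k-m)). pose proof (U_pos k). pose proof (U_pos (k-m+t)).
      pose proof (psi_pos (k+t)). pose proof (psi_pos (k-m+t)).
      assert (psi (k+t) * (U (k+t) * U (k-m)) <= psi (k+t) * (U k * U (k-m+t))) by (apply Rmult_le_compat_l; auto).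
      assert (psi (k+t) * (U k * U (k-m+t)) <= psi (k-m+t) * (U k * U (k-m+t))) by (apply Rmult_le_compat_r; nra).
      nra. }
  specialize (P m (le_n _)). replace (k - m + m)%nat with k in P by lia. exact P.
Qed.

Lemma up_logconc k : (p + m <= k)%nat -> C.up p m (k + m) * C.up p m (k - m) <= C.up p m k * C.up p m k.
Proof.
  intros Hk. pose proof (up_nonneg (k+m)). pose proof (up_nonneg (k-m)). pose proof (up_nonneg k).
  apply sq_le. nra. nra.
  replace (C.up p m (k + m) * C.up p m (k - m) * (C.up p m (k + m) * C.up p m (k - m))) with
    ((C.up p m (k + m) * C.up p m (k + m)) * (C.up p m (k - m) * C.up p m (k - m))) by ring.
  rewrite !up_sq. apply U_logconc; auto.
Qed.

End F.

End F.
Import F.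

Module G.
Open Scope R_scope.

Definition Zs (n : nat) := / ((INR n + 1) * sqrt (INR n + 1)).

Lemma sqrt_facts x : 1 <= x -> 1 <= sqrt x /\ sqrt x * sqrt x = x.
Proof.
  intros H. split. rewrite <- sqrt_1. apply sqrt_le_1_alt; auto. apply sqrt_sqrt; lra.
Qed.

Lemma Zs_pos n : 0 < Zs n.
Proof.
  unfold Zs. pose proof (pos_INR n). destruct (sqrt_facts (INR n + 1)) as [H1 H2]; [lra|].
  apply Rinv_0_lt_compat. nra.
Qed.

Lemma Zs_partial n : sum_f_R0 Zs n <= 3 - 2 / sqrt (INR n + 1).
Proof.
  induction n.
  - simpl. unfold Zs. simpl. replace (0+1) with 1 by ring. rewrite sqrt_1. lra.
  - change (sum_f_R0 Zs (S n)) with (sum_f_R0 Zs n + Zs (S n)). rewrite S_INR.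
    pose proof (pos_INR n).
    destruct (sqrt_facts (INR n + 1)) as [Ha1 Ha2]; [lra|].
    destruct (sqrt_facts (INR n + 1 + 1)) as [Hb1 Hb2]; [lra|].
    set (a := sqrt (INR n + 1)) in *. set (b := sqrt (INR n + 1 + 1)) in *.
    assert (Hab : a <= b) by nra. assert (Ha0 : 0 < a) by lra. assert (Hb0 : 0 < b) by lra.
    assert (Hp1 : 0 < b*b*b) by (repeat apply Rmult_lt_0_compat; lra).
    assert (Hp2 : 0 < a*b*(a+b)) by (repeat apply Rmult_lt_0_compat; lra).
    assert (Zs (S n) <= 2 / a - 2 / b).
    { unfold Zs. rewrite S_INR. fold b. rewrite <- Hb2.
      assert (E : 2 / a - 2 / b = 2 / (a * b * (a + b))).
      { assert (Hd : (b - a) * (a + b) = 1) by nra.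
        assert (0 < a) by lra. assert (0 < b) by lra.
        field_simplify_eq; try nra. }
      rewrite E. apply Rmult_le_reg_r with (b*b*b * (a*b*(a+b))). apply Rmult_lt_0_compat; lra.
      replace (/ (b * b * b) * (b * b * b * (a * b * (a + b)))) with (a*b*(a+b)) by (field; nra).
      replace (2 / (a * b * (a + b)) * (b * b * b * (a * b * (a + b)))) with (2*(b*b*b)) by (field; nra).
      nra. }
    lra.
Qed.

Lemma Zs_summable : exists l, infinite_sum Zs l.
Proof.
  apply (is_sum_bounded Zs 3). intros; left; apply Zs_pos.
  intro n. pose proof (Zs_partial n). destruct (sqrt_facts (INR n + 1)) as [H1 H2].
  pose proof (pos_INR n); lra.
  assert (0 <= 2 / sqrt (INR n + 1)) by (apply Rdiv_le_0_compat; lra). lra.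
Qed.

Section G.
Variables (p m : nat).
Hypothesis hm : (1 <= m)%nat.
Hypothesis h3 : (3 <= 2 * p + m)%nat.

Lemma lowU c k : (p + c <= k)%nat ->
  (INR k + 1) * sqrt (INR k + 1) <= C.up p m (k - c) * ((INR (p + c) + 1) * sqrt (INR (p + c) + 1)).
Proof.
  intros Hk. pose proof (up_lower p m hm (k - c) h3 ltac:(lia)) as L.
  pose proof (up_nonneg p m (k-c)).
  pose proof (pos_INR k). pose proof (pos_INR (p+c)).
  destruct (sqrt_facts (INR k + 1)) as [Hk1 Hk2]; [lra|].
  destruct (sqrt_facts (INR (p+c) + 1)) as [Hq1 Hq2]; [lra|].
  replace (k - c - p)%nat with (k - (p + c))%nat in L by lia.
  assert (EA : INR k = INR (k - (p+c)) + INR (p + c)) by (rewrite <- plus_INR; f_equal; lia).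
  set (B := INR (k - (p+c))) in *. assert (0 <= B) by apply pos_INR.
  set (q := INR (p + c) + 1) in *. set (u := C.up p m (k - c)) in *.
  set (sk := sqrt (INR k + 1)) in *. set (sq := sqrt q) in *.
  apply sq_le. nra. apply Rmult_le_pos; nra.
  assert (Hx : INR k + 1 <= (B + 1) * q) by (unfold q; nra).
  assert (Hc : (INR k + 1) * ((INR k + 1) * (INR k + 1)) <= ((B+1)*q) * (((B+1)*q) * ((B+1)*q))).
  { assert (0 <= INR k + 1) by lra.
    assert ((INR k + 1) * (INR k + 1) <= ((B+1)*q) * ((B+1)*q)) by nra. nra. }
  replace ((INR k + 1) * sk * ((INR k + 1) * sk)) with ((INR k + 1) * ((INR k + 1) * (INR k + 1))) by (rewrite <- Hk2; ring).
  replace (u * (q * sq) * (u * (q * sq))) with ((u * u) * (q * (q * q))) by (rewrite <- Hq2; ring).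
  assert (((B+1)*q) * (((B+1)*q) * ((B+1)*q)) = ((B+1)*((B+1)*(B+1))) * (q*(q*q))) by ring.
  assert (0 < q*(q*q)) by (unfold q; nra).
  assert ((B+1)*((B+1)*(B+1)) * (q*(q*q)) <= (u*u) * (q*(q*q))) by (apply Rmult_le_compat_r; lra).
  lra.
Qed.

Lemma inv_up c k : (p + c <= k)%nat ->
  / C.up p m (k - c) <= ((INR (p + c) + 1) * sqrt (INR (p + c) + 1)) * Zs k.
Proof.
  intros Hk. pose proof (lowU c k Hk). unfold Zs.
  pose proof (up_ge1 p m hm (k-c) h3 ltac:(lia)).
  pose proof (pos_INR k). pose proof (pos_INR (p+c)).
  destruct (sqrt_facts (INR k + 1)) as [Hk1 Hk2]; [lra|].
  destruct (sqrt_facts (INR (p+c) + 1)) as [Hq1 Hq2]; [lra|].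
  set (L := (INR k + 1) * sqrt (INR k + 1)) in *. set (Q := (INR (p + c) + 1) * sqrt (INR (p + c) + 1)) in *.
  assert (0 < L) by (unfold L; nra). assert (0 < Q) by (unfold Q; nra).
  set (u := C.up p m (k - c)) in *.
  apply Rmult_le_reg_r with (u * L). nra.
  replace (/ u * (u * L)) with L by (field; lra).
  replace (Q * / L * (u * L)) with (u * Q) by (field; lra). lra.
Qed.

End G.

Lemma step_real s u u' d yr yi zr zi wr wi : s*s = 1 -> 1 <= d -> 1 <= u -> 0 <= u' -> u'*d <= u*u ->
  u*wr + d*zr = -(s*yi) -> u*wi + d*zi = s*yr ->
  u'*(wr*wr+wi*wi) <= (1 + (/d + 2/u)) * Rmax (u*(yr*yr+yi*yi)) (d*(zr*zr+zi*zi)).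
Proof.
  intros hs hd hu hu' hlc E1 E2.
  set (W := wr*wr+wi*wi). set (Ny := yr*yr+yi*yi). set (Nz := zr*zr+zi*zi).
  assert (HW : 0 <= W) by (unfold W; nra). assert (HNy : 0 <= Ny) by (unfold Ny; nra).
  assert (HNz : 0 <= Nz) by (unfold Nz; nra).
  assert (S1 : u*u*W <= (1+d)*Ny + (d*d+d)*Nz).
  { assert (A1 : u*wr = -(s*yi) - d*zr) by lra. assert (A2 : u*wi = s*yr - d*zi) by lra.
    assert (A3 : u*u*W = (u*wr)*(u*wr) + (u*wi)*(u*wi)) by (unfold W; ring).
    rewrite A3, A1, A2.
    assert (C1 : 2*(s*yi)*zr <= yi*yi + zr*zr).
    { pose proof (Rle_0_sqr (s*yi - zr)). unfold Rsqr in *.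
      assert ((s*yi)*(s*yi) = yi*yi) by (transitivity ((s*s)*(yi*yi)); [ring|rewrite hs; ring]). nra. }
    assert (C2 : -(2*(s*yr)*zi) <= yr*yr + zi*zi).
    { pose proof (Rle_0_sqr (s*yr + zi)). unfold Rsqr in *.
      assert ((s*yr)*(s*yr) = yr*yr) by (transitivity ((s*s)*(yr*yr)); [ring|rewrite hs; ring]). nra. }
    assert (E : (-(s*yi) - d*zr)*(-(s*yi) - d*zr) + (s*yr - d*zi)*(s*yr - d*zi)
      = (s*s)*(yi*yi + yr*yr) + d*d*(zr*zr+zi*zi) + d*(2*(s*yi)*zr - 2*(s*yr)*zi)) by ring.
    rewrite E, hs. unfold Ny, Nz.
    assert (d*(2*(s*yi)*zr - 2*(s*yr)*zi) <= d*(yi*yi+zr*zr+yr*yr+zi*zi)) by (apply Rmult_le_compat_l; lra).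
    nra. }
  set (X := (1+d)*Ny + (d*d+d)*Nz).
  assert (HX : 0 <= X) by (unfold X; nra).
  assert (S2 : u'*W <= X / d).
  { assert (0 < u*u) by nra.
    apply Rmult_le_reg_r with (d*(u*u)). nra.
    replace (X / d * (d * (u * u))) with (u*u*X) by (field; lra).
    assert (0 <= u'*d) by (apply Rmult_le_pos; lra).
    assert (u'*d*(u*u*W) <= u'*d*X) by (apply Rmult_le_compat_l; unfold X; lra).
    assert (u'*d*X <= u*u*X) by (apply Rmult_le_compat_r; lra).
    assert (E5 : u' * W * (d * (u * u)) = u'*d*(u*u*W)) by ring. lra. }
  set (M := Rmax (u*Ny) (d*Nz)).
  assert (M1 : u*Ny <= M) by apply Rmax_l. assert (M2 : d*Nz <= M) by apply Rmax_r.
  assert (E3 : X / d = (1 + /d) * Ny + (1 + /d) * (d * Nz)) by (unfold X; field; lra).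
  assert (T1 : (1 + /d) * Ny <= 2 / u * M).
  { assert (/d <= 1) by (rewrite <- Rinv_1; apply Rinv_le_contravar; lra).
    assert ((1 + /d) * Ny <= 2 * Ny) by nra.
    assert (2 * Ny = 2 / u * (u * Ny)) by (field; lra).
    assert (0 <= 2 / u) by (apply Rdiv_le_0_compat; lra).
    assert (2 / u * (u * Ny) <= 2/u * M) by (apply Rmult_le_compat_l; auto). lra. }
  assert (T2 : (1 + /d) * (d * Nz) <= (1 + /d) * M).
  { apply Rmult_le_compat_l; auto. assert (0 < /d) by (apply Rinv_0_lt_compat; lra). lra. }
  lra.
Qed.

Lemma exp_ge_1p x : 0 <= x -> 1 + x <= exp x.
Proof.
  intros H. destruct (Req_dec x 0). subst. rewrite exp_0. lra. left. apply exp_ineq1; auto.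
Qed.

Section R.
Variables (p m : nat).
Hypothesis hm : (1 <= m)%nat.
Hypothesis h3 : (3 <= 2 * p + m)%nat.
Variable s : R.
Hypothesis hs : s * s = 1.

Definition lam := mkC 0 s.

Definition Rec (y : vec) := forall k, (p <= k)%nat ->
  Cadd (Cscale (C.up p m k) (y (k + m)%nat)) (Cscale (dn p m k) (y (k - m)%nat)) = Cmul lam (y k).

Definition zlow (y : vec) := forall k, (k < p)%nat -> y k = C0.

Variable y : vec.
Hypothesis Zy : zlow y.
Hypothesis Ry : Rec y.

Let upk k := C.up p m k.
Definition Hk k := C.up p m k * Cnorm2 (y k).

Lemma Hk_nonneg k : 0 <= Hk k.
Proof. unfold Hk. apply Rmult_le_pos. apply up_nonneg. apply Cnorm2_pos. Qed.

Definition ee k := / C.up p m (k - m - m) + 2 / C.up p m (k - m).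

Lemma Hk_step k : (p + m + m <= k)%nat -> Hk k <= (1 + ee k) * Rmax (Hk (k - m)) (Hk (k - m - m)).
Proof.
  intros Hk0. set (j := (k - m)%nat).
  pose proof (Ry j ltac:(unfold j; lia)) as R.
  replace (j + m)%nat with k in R by (unfold j; lia).
  assert (Ed : dn p m j = C.up p m (j - m)) by (unfold dn; destruct (Nat.leb_spec (p+m) j); [auto|unfold j in *; lia]).
  rewrite Ed in R.
  apply (f_equal re) in R as R1. apply (f_equal im) in R as R2.
  unfold Cadd, Cscale, Cmul, lam in R1, R2; simpl in R1, R2.
  unfold Hk, ee, Cnorm2. fold j.
  apply step_real with (s := s); auto.
  - apply up_ge1; auto; unfold j; lia.
  - apply up_ge1; auto; unfold j; lia.
  - apply up_nonneg.
  - replace k with (j + m)%nat by (unfold j; lia). apply up_logconc; auto. unfold j; lia.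
  - lra.
  - lra.
Qed.

Fixpoint Bm n := match n with O => Hk 0 | S n' => Rmax (Bm n') (Hk (S n')) end.

Lemma Bm_ge k n : (k <= n)%nat -> Hk k <= Bm n.
Proof.
  induction n; intros H. replace k with 0%nat by lia. simpl; lra.
  simpl. destruct (Nat.eq_dec k (S n)). subst. apply Rmax_r.
  eapply Rle_trans. apply IHn; lia. apply Rmax_l.
Qed.

Lemma Bm_mono a b : (a <= b)%nat -> Bm a <= Bm b.
Proof.
  induction b; intros H. replace a with 0%nat by lia. lra.
  destruct (Nat.eq_dec a (S b)). subst; lra. eapply Rle_trans. apply IHb; lia. simpl; apply Rmax_l.
Qed.

Lemma Bm_nonneg n : 0 <= Bm n.
Proof. eapply Rle_trans. apply (Hk_nonneg 0). apply Bm_ge; lia. Qed.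

Definition ep n := if Nat.leb (p + m + m) n then ee n else 0.

Lemma ep_nonneg n : 0 <= ep n.
Proof.
  unfold ep, ee. destruct (Nat.leb_spec (p+m+m) n); [|lra].
  pose proof (up_ge1 p m hm (n-m-m) h3 ltac:(lia)). pose proof (up_ge1 p m hm (n-m) h3 ltac:(lia)).
  assert (0 < / C.up p m (n-m-m)) by (apply Rinv_0_lt_compat; lra).
  assert (0 <= 2 / C.up p m (n-m)) by (apply Rdiv_le_0_compat; lra). lra.
Qed.

Lemma sum_nonneg f n : (forall k, 0 <= f k) -> 0 <= sum_f_R0 f n.
Proof. intros H. induction n; simpl. apply H. specialize (H (S n)). lra. Qed.

Lemma Bm_bound n : Bm n <= Bm (p + m + m) * exp (sum_f_R0 ep n).
Proof.
  pose proof (Bm_nonneg (p+m+m)) as HK.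
  induction n.
  - pose proof (exp_ge_1p (sum_f_R0 ep 0) (sum_nonneg ep 0 ep_nonneg)).
    pose proof (Bm_mono 0 (p+m+m) ltac:(lia)). pose proof (sum_nonneg ep 0 ep_nonneg).
    assert (Bm (p+m+m) * 1 <= Bm (p+m+m) * exp (sum_f_R0 ep 0)) by (apply Rmult_le_compat_l; lra). lra.
  - destruct (Nat.leb_spec (S n) (p+m+m)).
    + pose proof (exp_ge_1p (sum_f_R0 ep (S n)) (sum_nonneg ep (S n) ep_nonneg)).
      pose proof (Bm_mono (S n) (p+m+m) H). pose proof (sum_nonneg ep (S n) ep_nonneg).
      assert (Bm (p+m+m) * 1 <= Bm (p+m+m) * exp (sum_f_R0 ep (S n))) by (apply Rmult_le_compat_l; lra). lra.
    + assert (St : Bm (S n) <= (1 + ep (S n)) * Bm n).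
      { pose proof (ep_nonneg (S n)) as Ep. pose proof (Bm_nonneg n) as Bn.
        assert (Ee : ep (S n) = ee (S n)) by (unfold ep; destruct (Nat.leb_spec (p+m+m) (S n)); [auto|lia]).
        simpl Bm. apply Rmax_lub. nra.
        eapply Rle_trans. apply Hk_step. lia. rewrite <- Ee.
        apply Rmult_le_compat_l. lra.
        apply Rmax_lub; apply Bm_ge; lia. }
      change (sum_f_R0 ep (S n)) with (sum_f_R0 ep n + ep (S n)). rewrite exp_plus.
      pose proof (exp_ge_1p (ep (S n)) (ep_nonneg (S n))). pose proof (Bm_nonneg n).
      pose proof (exp_pos (sum_f_R0 ep n)).
      assert ((1 + ep (S n)) * Bm n <= exp (ep (S n)) * (Bm (p+m+m) * exp (sum_f_R0 ep n))).
      { apply Rmult_le_compat; try lra. pose proof (ep_nonneg (S n)); lra. }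
      nra.
Qed.

Definition Qc c := (INR (p + c) + 1) * sqrt (INR (p + c) + 1).

Lemma Qc_pos c : 0 < Qc c.
Proof.
  unfold Qc. pose proof (pos_INR (p+c)). destruct (sqrt_facts (INR (p+c)+1)); [lra|]. nra.
Qed.

Lemma ep_sum : exists E, forall n, sum_f_R0 ep n <= E.
Proof.
  destruct Zs_summable as [L HL].
  destruct (is_sum_le ep (fun n => (Qc (m+m) + 2 * Qc m) * Zs n) ((Qc (m+m) + 2 * Qc m) * L)) as [E [HE _]].
  - intro n. split. apply ep_nonneg. unfold ep, ee.
    pose proof (Zs_pos n). pose proof (Qc_pos (m+m)). pose proof (Qc_pos m).
    destruct (Nat.leb_spec (p+m+m) n); [|nra].
    pose proof (inv_up p m hm h3 (m+m) n ltac:(lia)). pose proof (inv_up p m hm h3 m n ltac:(lia)).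
    replace (n - m - m)%nat with (n - (m+m))%nat by lia. fold (Qc (m+m)) (Qc m) in *.
    unfold Rdiv. nra.
  - apply is_sum_scal; auto.
  - exists E. intro n. apply sum_le_total; auto. apply ep_nonneg.
Qed.

Lemma rec_l2 : l2 y.
Proof.
  destruct ep_sum as [E HE].
  set (K := Bm (p + m + m) * exp E).
  assert (HK : forall k, Hk k <= K).
  { intro k. eapply Rle_trans. apply (Bm_ge k k); lia. eapply Rle_trans. apply Bm_bound.
    apply Rmult_le_compat_l. apply Bm_nonneg. destruct (Rle_lt_or_eq_dec _ _ (HE k)).
    left; apply exp_increasing; auto. rewrite e; lra. }
  assert (K0 : 0 <= K) by (unfold K; apply Rmult_le_pos; [apply Bm_nonneg|left; apply exp_pos]).
  destruct Zs_summable as [L HL].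
  destruct (is_sum_le (fun k => Cnorm2 (y k)) (fun k => (K * Qc 0) * Zs k) ((K * Qc 0) * L)) as [S [HS _]].
  - intro k. split. apply Cnorm2_pos.
    pose proof (Zs_pos k). pose proof (Qc_pos 0).
    destruct (Nat.ltb_spec k p).
    + rewrite Zy by auto. unfold Cnorm2; simpl. replace (0*0+0*0) with 0 by ring.
      apply Rmult_le_pos; [apply Rmult_le_pos|]; lra.
    + rename H1 into Hpk. pose proof (inv_up p m hm h3 0 k ltac:(lia)) as H1. replace (k - 0)%nat with k in H1 by lia.
      fold (Qc 0) in H1. pose proof (HK k) as H2. unfold Hk in H2.
      pose proof (up_ge1 p m hm k h3 Hpk).
      pose proof (Cnorm2_pos (y k)).
      assert (Cnorm2 (y k) <= K * / C.up p m k).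
      { apply Rmult_le_reg_l with (C.up p m k). lra.
        replace (C.up p m k * (K * / C.up p m k)) with K by (field; lra). lra. }
      assert (K * / C.up p m k <= K * (Qc 0 * Zs k)) by (apply Rmult_le_compat_l; auto).
      lra.
  - apply is_sum_scal; auto.
  - exists S; auto.
Qed.

End R.

End G.
Import G.

Module E.
Open Scope R_scope.

Section E.
Variables (p m : nat).
Hypothesis hm : (1 <= m)%nat.
Variable s : R.
Hypothesis hs : s * s = 1.

Hypothesis h3 : (3 <= 2 * p + m)%nat.
Local Notation lam := (G.lam s).
Local Notation Rec := (G.Rec p m s).
Local Notation zlow := (G.zlow p).

Lemma up_ge1 k : (p <= k)%nat -> 1 <= C.up p m k.
Proof. intros; apply F.up_ge1; auto. Qed.

Lemma rec_l2 y : zlow y -> Rec y -> l2 y.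
Proof. intros; eapply G.rec_l2; eauto. Qed.

Definition val (i n : nat) (g : vec) : Defs.C :=
  if Nat.ltb n p then C0 else if Nat.ltb n (p + m) then (if Nat.eqb n (p + i) then mkC 1 0 else C0)
  else Cscale (/ C.up p m (n - m)) (Csub (Cmul lam (g (n - m)%nat)) (Cscale (dn p m (n - m)) (g (n - m - m)%nat))).

Fixpoint G (i n : nat) : vec :=
  match n with
  | O => fun _ => C0
  | S n' => fun k => if Nat.ltb k n' then G i n' k else val i n' (G i n')
  end.

Definition fam (i : nat) : vec := fun k => G i (S k) k.

Lemma G_stable i n k : (k < n)%nat -> G i n k = fam i k.
Proof.
  induction n; intros H. lia. simpl. destruct (Nat.ltb_spec k n).
  - apply IHn; auto.
  - replace k with n by lia. unfold fam. simpl. rewrite Nat.ltb_irrefl. reflexivity.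
Qed.

Lemma val_ext i n g g' : (forall k, (k < n)%nat -> g k = g' k) -> val i n g = val i n g'.
Proof.
  intros H. unfold val. destruct (Nat.ltb_spec n p); auto. destruct (Nat.ltb_spec n (p+m)); auto.
  rewrite !H by lia. reflexivity.
Qed.

Lemma fam_eq i k : fam i k = val i k (fam i).
Proof.
  unfold fam at 1. simpl. rewrite Nat.ltb_irrefl. apply val_ext. intros; apply G_stable; auto.
Qed.

Lemma fam_low i : zlow (fam i).
Proof. intros k Hk. rewrite fam_eq. unfold val. destruct (Nat.ltb_spec k p); auto; lia. Qed.

Lemma fam_init i j : (j < m)%nat -> fam i (p + j)%nat = if Nat.eqb j i then mkC 1 0 else C0.
Proof.
  intros Hj. rewrite fam_eq. unfold val. destruct (Nat.ltb_spec (p+j) p); [lia|].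
  destruct (Nat.ltb_spec (p+j) (p+m)); [|lia].
  destruct (Nat.eqb_spec (p+j) (p+i)); destruct (Nat.eqb_spec j i); auto; lia.
Qed.

Lemma fam_rec i : Rec (fam i).
Proof.
  intros k Hk. rewrite (fam_eq i (k+m)). unfold val.
  destruct (Nat.ltb_spec (k+m) p); [lia|]. destruct (Nat.ltb_spec (k+m) (p+m)); [lia|].
  replace (k + m - m)%nat with k by lia.
  pose proof (up_ge1 k Hk).
  apply Ceq; unfold Cadd, Cscale, Csub, Cmul, lam; simpl; field; lra.
Qed.

Lemma rec_unique y y' : zlow y -> zlow y' -> Rec y -> Rec y' ->
  (forall j, (j < m)%nat -> y (p + j)%nat = y' (p + j)%nat) -> forall k, y k = y' k.
Proof.
  intros Z Z' R R' I k. induction k as [k IH] using (well_founded_induction lt_wf).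
  destruct (Nat.ltb_spec k p). rewrite Z, Z'; auto.
  destruct (Nat.ltb_spec k (p+m)). replace k with (p + (k - p))%nat by lia. apply I; lia.
  set (j := (k - m)%nat). assert (Hj : (p <= j)%nat) by (unfold j; lia).
  specialize (R j Hj). specialize (R' j Hj). replace (j + m)%nat with k in R, R' by (unfold j; lia).
  rewrite (IH j) in R by (unfold j; lia). rewrite (IH (j - m)%nat) in R by (unfold j; lia).
  pose proof (up_ge1 j Hj).
  rewrite <- R' in R. apply (f_equal re) in R as Rr. apply (f_equal im) in R as Ri.
  unfold Cadd, Cscale in Rr, Ri; simpl in Rr, Ri.
  apply Ceq; apply Rmult_eq_reg_l with (C.up p m j); lra.
Qed.

Lemma rec_add y y' : Rec y -> Rec y' -> Rec (fun k => Cadd (y k) (y' k)).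
Proof.
  intros R R' k Hk. specialize (R k Hk). specialize (R' k Hk).
  apply (f_equal re) in R as Rr. apply (f_equal im) in R as Ri.
  apply (f_equal re) in R' as Rr'. apply (f_equal im) in R' as Ri'.
  unfold Cadd, Cscale, Cmul, lam in *; simpl in *. apply Ceq; simpl; nra.
Qed.

Lemma rec_scal c y : Rec y -> Rec (fun k => Cmul c (y k)).
Proof.
  intros R k Hk. specialize (R k Hk).
  apply (f_equal re) in R as Rr. apply (f_equal im) in R as Ri.
  unfold Cadd, Cscale, Cmul, lam in *; simpl in *.
  match type of Rr with ?a = ?b => match type of Ri with ?a' = ?b' =>
  apply Ceq; simpl;
  [transitivity (re c * a - im c * a'); [ring|rewrite Rr, Ri; ring]
  |transitivity (re c * a' + im c * a); [ring|rewrite Rr, Ri; ring]] end end.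
Qed.

Lemma rec_zero : Rec (fun _ => C0).
Proof. intros k Hk. apply Ceq; unfold Cadd, Cscale, Cmul, lam; simpl; ring. Qed.

Lemma rec_csum (c : nat -> Defs.C) n : Rec (fun k => Csum (fun i => Cmul (c i) (fam i k)) n).
Proof.
  induction n; simpl. apply rec_zero. apply rec_add; auto. apply rec_scal, fam_rec.
Qed.

Lemma csum_low (c : nat -> Defs.C) n : zlow (fun k => Csum (fun i => Cmul (c i) (fam i k)) n).
Proof.
  intros k Hk. induction n; simpl; auto. rewrite IHn, fam_low by auto.
  apply Ceq; unfold Cadd, Cmul; simpl; ring.
Qed.

Lemma csum_delta (c : nat -> Defs.C) j n : (j < m)%nat ->
  Csum (fun i => Cmul (c i) (fam i (p + j)%nat)) n = if Nat.ltb j n then c j else C0.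
Proof.
  intros Hj. induction n; simpl; auto. rewrite IHn, fam_init by auto.
  destruct (Nat.eqb_spec j n); destruct (Nat.ltb_spec j n); destruct (Nat.ltb_spec j (S n)); try lia; try subst;
  apply Ceq; unfold Cadd, Cmul; simpl; ring.
Qed.


Lemma l2_fin (x : vec) N : (forall j, (N <= j)%nat -> x j = C0) -> l2 x.
Proof.
  intros H. exists (sum_f_R0 (fun k => Cnorm2 (x k)) N). apply is_sum_finite.
  intros k Hk. rewrite H by auto. unfold Cnorm2; simpl; ring.
Qed.

Lemma l2_lam y : l2 y -> l2 (fun k => Cmul lam (y k)).
Proof.
  intros [A HA]. exists A. eapply is_sum_ext; [|exact HA]. intro k.
  unfold Cnorm2, Cmul, lam; simpl.
  transitivity ((s*s)*(re (y k) * re (y k) + im (y k) * im (y k))); [rewrite hs; ring|ring].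
Qed.

Lemma Happly_rec y : zlow y -> Rec y -> forall k, Happly p m y k = Cmul lam (y k).
Proof.
  intros Z R k. destruct (Nat.ltb_spec k p).
  - rewrite Happly_low, Z by auto. apply Ceq; unfold Cmul; simpl; ring.
  - rewrite (Happly_eq p m hm). rewrite <- R by auto. unfold upc. destruct (Nat.leb_spec p k); [|lia].
    reflexivity.
Qed.

Lemma fam_def i : deficiency_space p m s (fam i).
Proof.
  assert (L : l2 (fam i)) by (apply rec_l2; [apply fam_low|apply fam_rec]).
  split. split; auto. apply fam_low.
  intros x w [Lx [Lw [xs [P [Cx Cw]]]]].
  apply (lim_inner_eq (fun n => Happly p m (xs n)) w (fun _ => fam i) (fam i) xs x
     (fun _ k => Cmul lam (fam i k)) (fun k => Cmul lam (fam i k))); try assumption;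
  try apply l2conv_const; try apply l2_lam; try assumption; try (apply (inBp_l2 p); assumption).
  intros b n. destruct (poly_fin p (xs n) (P n)) as [N HN].
  destruct (poly_sym p m hm b (xs n) (fam i) N HN) as [S [H1 H2]]. exists S. split; auto.
  eapply is_sum_ext; [|exact H2]. intro k. simpl. rewrite Happly_rec; auto. apply fam_low. apply fam_rec.
Qed.

Definition ek (k : nat) : vec := fun j => if Nat.eqb j k then mkC 1 0 else C0.

Lemma ek_sum b k (v : vec) : infinite_sum (fun j => ipc b (ek k j) (v j)) (ipc b (mkC 1 0) (v k)).
Proof.
  assert (H0 : forall z, ipc b C0 z = 0) by (intros; destruct b; unfold ipc; simpl; ring).
  replace (ipc b (mkC 1 0) (v k)) with (sum_f_R0 (fun j => ipc b (ek k j) (v j)) (S k)).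
  apply is_sum_finite. intros j Hj. unfold ek. destruct (Nat.eqb_spec j k); [lia|]. apply H0.
  rewrite (sum_delta m hm _ (S k) k). unfold ek. rewrite Nat.eqb_refl. reflexivity.
  intros j Hj. unfold ek. destruct (Nat.eqb_spec j k); [lia|]. apply H0. lia.
Qed.

Lemma def_rec y : deficiency_space p m s y -> zlow y /\ Rec y.
Proof.
  intros [[Ly Zy] D]. split. intros k Hk; auto.
  intros k Hk.
  assert (Pe : polyBp p (ek k)).
  { split. intros j Hj. unfold ek. destruct (Nat.eqb_spec j k); auto; lia.
    exists (S k). intros j Hj. unfold ek. destruct (Nat.eqb_spec j k); auto; lia. }
  assert (Hm : Hmin p m (ek k) (Happly p m (ek k))).
  { split; [|split].
    - split. apply (l2_fin _ (S k)). intros j Hj. unfold ek. destruct (Nat.eqb_spec j k); auto; lia. apply Pe.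
    - split. apply (l2_fin _ (S k + m)). intros j Hj. rewrite (Happly_eq p m hm).
      unfold ek. destruct (Nat.eqb_spec (j+m) k); [lia|]. destruct (Nat.eqb_spec (j-m) k); [lia|].
      apply Ceq; unfold Cadd, Cscale; simpl; ring.
      intros j Hj. apply Happly_low; auto.
    - exists (fun _ => ek k). split; auto. split; apply l2conv_const. }
  destruct (D _ _ Hm) as [z [Hz1 Hz2]]. apply has_inner_ipc in Hz1, Hz2.
  destruct Hz1 as [A1 A2]. destruct Hz2 as [B1 B2].
  assert (E : forall b, ipc b (mkC 1 0) (Happly p m y k) = ipc b (mkC 1 0) (Cmul lam (y k))).
  { intro b. destruct (poly_sym p m hm b (ek k) y (S k)) as [S [S1 S2]].
    { intros j Hj. unfold ek. destruct (Nat.eqb_spec j k); auto; lia. }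
    transitivity S. eapply uniqueness_sum. apply ek_sum. auto.
    transitivity (if b then re z else im z).
    - destruct b; [apply (uniqueness_sum _ _ _ S1 A1)|apply (uniqueness_sum _ _ _ S1 A2)].
    - destruct b; [apply (uniqueness_sum _ _ _ B1 (ek_sum _ _ _))|apply (uniqueness_sum _ _ _ B2 (ek_sum _ _ _))]. }
  rewrite (Happly_eq p m hm) in E. unfold upc in E. destruct (Nat.leb_spec p k); [|lia].
  pose proof (E true) as E1. pose proof (E false) as E2. unfold ipc in E1, E2; simpl in E1, E2.
  apply Ceq; unfold Cadd, Cscale in *; simpl in *; lra.
Qed.

Theorem def_dim : has_dim (deficiency_space p m s) m.
Proof.
  exists fam. split; [|split].
  - intros i _. apply fam_def.
  - intros c H i Hi. specialize (H (p + i)%nat). rewrite csum_delta in H by auto.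
    destruct (Nat.ltb_spec i m); [auto|lia].
  - intros y Hy. destruct (def_rec y Hy) as [Z R].
    exists (fun i => y (p + i)%nat). intro k.
    apply (rec_unique y (fun k => Csum (fun i => Cmul (y (p + i)%nat) (fam i k)) m)); auto.
    apply csum_low. apply rec_csum.
    intros j Hj. rewrite csum_delta by auto. destruct (Nat.ltb_spec j m); [auto|lia].
Qed.

End E.

End E.
Import E.

Theorem theorem2p3 (p m : nat) (hm : (1 <= m)%nat) (hpm : INR p + INR m / 2 > 1) :
  (forall x y y', Hmin p m x y -> Hmin p m x y' -> forall k, y k = y' k) /\
  (forall (xs ys : nat -> vec) x y,
      (forall n, Hmin p m (xs n) (ys n)) -> l2conv xs x -> l2conv ys y ->
      Hmin p m x y) /\
  (forall x y x' y', Hmin p m x y -> Hmin p m x' y' ->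
      exists z, has_inner y x' z /\ has_inner x y' z) /\
  has_dim (deficiency_space p m 1) m /\
  has_dim (deficiency_space p m (-1)) m.
Proof.
  assert (h3 : (3 <= 2 * p + m)%nat).
  { destruct (le_lt_dec 3 (2*p+m)) as [H|H]; auto. exfalso.
    assert (H' : (2 * p + m <= 2)%nat) by lia. apply le_INR in H'.
    rewrite plus_INR, mult_INR in H'. simpl in H'. lra. }
  split; [|split; [|split; [|split]]].
  - intros x y y' H1 H2 k. rewrite (Hmin_coord p m hm x y H1 k), (Hmin_coord p m hm x y' H2 k). reflexivity.
  - apply Hmin_closed.
  - apply Hmin_sym; auto.
  - apply def_dim; auto. ring.
  - apply def_dim; auto. ring.
Qed.
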